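(* Let $A$ be a $0$-$1$ matrix over a set $\mathcal G$ with no identically zero rows, and let $L_\alpha$, $\psi$ and $j$ be as in the context. If $f\in\bigoplus_{x\in\mathcal G}C(\Delta_x;\mathbb Z)$ satisfies $L_\alpha f\in\psi(\tilde{\mathfrak R}_A)$, then $f\in j\big(\bigoplus_{x\in\mathcal G}\mathbb Z\big)$.
   Context: $\mathbb F$ is the free group on $\mathcal G$, $\mathbb F^+$ the unital subsemigroup generated by $\mathcal G$. $\Omega_A^\tau$ is the set of $\xi\subset\mathbb F$ such that $e\in\xi$, $\xi$ is convex (contains the shortest path between any two of its elements), for each $\omega\in\xi$ there is at most one $y\in\mathcal G$ with $\omega y\in\xi$, and if $\omega,\omega y\in\xi$ ($y\in\mathcal G$) then for $x\in\mathcal G$: $\omega x^{-1}\in\xi\iff A(x,y)=1$. With the product topology on subsets of $\mathbb F$, $\widetilde\Omega_A$ is the closure in $\Omega_A^\tau$ of the elements with no upper bound for the order $s\le t\iff s^{-1}t\in\mathbb F^+$. $\Delta_t=\{\xi\in\widetilde\Omega_A:t\in\xi\}$ (clopen). $L_\alpha:\bigoplus_{x\in\mathcal G}C(\Delta_x,\mathbb Z)\to C(\widetilde\Omega_A,\mathbb Z)$ is $L_\alpha f=\sum_x\big(f_x-\alpha_x^{-1}(f_x)\big)$, where $f_x$ is extended by $0$ off $\Delta_x$ and $\alpha_x^{-1}(f_x)(\xi)=f_x(x\xi)$ for $\xi\in\Delta_{x^{-1}}$, $0$ otherwise. $j:\bigoplus_{x\in\mathcal G}\mathbb Z\to\bigoplus_{x\in\mathcal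 G}C(\Delta_x;\mathbb Z)$ sends the $x$-th basis element to the characteristic function $1_{\Delta_x}$ in the $x$-th summand. $\rho_i(j)=A(i,j)$, $\delta_i=$ indicator of $\{i\}$; $\tilde R_A\subset\ell^\infty(\mathcal G)$ is the $C^*$-algebra generated by $\mathbf 1$ and all $\rho_i,\delta_i$; $\tilde{\mathfrak R}_A\subset\mathbb Z^{\mathcal G}$ is the ring generated by $\mathbf 1$ and all $\delta_i,\rho_i$. $\tilde{\mathcal G}=\mathcal G\cup\{\star\}$; $c_j(i)=A(i,j)$; $\tilde\Gamma_A$ is the closure of $\{(j,c_j)\}$ in $\tilde{\mathcal G}\times\{0,1\}^{\mathcal G}$; each $f\in\tilde R_A$ has a unique continuous extension $\hat f$ to $\tilde\Gamma_A$ (identifying $j$ with $(j,c_j)$). For $\xi\in\widetilde\Omega_A$, $R_\xi(e)=\{x\in\mathcal G:x^{-1}\in\xi\}$ and $\sigma(\xi)_1$ is the unique element of $\xi\cap\mathcal G$, or $\star$ if empty. $\psi:\tilde R_A\to C(\widetilde\Omega_A)$ is $\psi(f)(\xi)=\hat f(\sigma(\xi)_1,R_\xi(e))$; it is an injective unital $*$-homomorphism with $\psi(\delta_i)=1_{\Delta_i}$ and $\psi(\rho_i)=1_{\Delta_{i^{-1}}}$. *)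

(* Defs.v *)
From mathcomp Require Import all_boot all_order all_algebra.
From mathcomp Require Import boolp.
Set Implicit Arguments. Unset Strict Implicit. Unset Printing Implicit Defensive.
Import GRing.Theory.
Local Open Scope ring_scope.

(* The free group F on a set (type) G, as reduced words.               *)
(* A letter (x, true) stands for the generator x, (x, false) for x^-1. *)
Section FreeGroup.
Variable G : eqType.

Definition letter := (G * bool)%type.
Definition word := seq letter.

Definition linv (a : letter) : letter := (a.1, ~~ a.2).

Fixpoint reduced (w : word) : bool :=
  match w with
  | a :: ((b :: _) as w') => (b != linv a) && reduced w'
  | _ => true
  end.

Definition push (a : letter) (w : word) : word :=
  match w with
  | b :: w' => if b == linv a then w' else a :: w
  | [::] => [:: a]
  end.

Definition fmul (w v : word) : word := foldr push v w.
Definition finv (w : word) : word := rev (map linv w).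
Definition gen (x : G) : word := [:: (x, true)].
Definition geninv (x : G) : word := [:: (x, false)].

(* F^+ : unital subsemigroup generated by G = positive words *)
Definition positive (w : word) : bool := all (fun a : letter => a.2) w.

Definition fle (s t : word) : Prop := positive (fmul (finv s) t).
End FreeGroup.

(* subsets of F are predicates on words (all of whose elements are reduced) *)
Section Omega.
Variable G : eqType.
Variable A : G -> G -> bool.

Local Notation word := (word G).

Definition OmegaTau (xi : (word -> Prop)) : Prop :=
  [/\ (forall w, xi w -> reduced w),
      xi [::],
      (* convexity: xi contains the geodesic s, s p_1, ..., t for s,t in xi *)
      (forall s t k, xi s -> xi t -> xi (fmul s (take k (fmul (finv s) t)))),
      (forall w y y', xi w -> xi (fmul w (gen y)) -> xi (fmul w (gen y')) -> y = y') &
      (forall w y x, xi w -> xi (fmul w (gen y)) ->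
          (xi (fmul w (geninv x)) <-> A x y))].

Definition unbounded (xi : (word -> Prop)) : Prop :=
  ~ exists t : word, reduced t /\ forall s, xi s -> fle s t.

(* the product topology on subsets of F: basic neighbourhoods of xi are
   determined by finite sets of group elements *)
Definition agree_on (l : seq word) (xi eta : (word -> Prop)) : Prop :=
  forall w, w \in l -> (xi w <-> eta w).

(* tilde Omega_A : closure in Omega_A^tau of the unbounded elements *)
Definition OmegaTilde (xi : (word -> Prop)) : Prop :=
  OmegaTau xi /\
  forall l : seq word, exists eta, [/\ OmegaTau eta, unbounded eta & agree_on l xi eta].

Definition Delta (t : word) (xi : (word -> Prop)) : Prop := OmegaTilde xi /\ xi t.

Definition translate (x : G) (xi : (word -> Prop)) : (word -> Prop) :=
  fun v => exists w, xi w /\ v = fmul (gen x) w.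

(* continuity of a Z-valued function on the subspace Delta_x
   (Z discrete, product topology on subsets of F) *)
Definition continuous_on_Delta (t : word) (g : (word -> Prop) -> int) : Prop :=
  forall xi, Delta t xi ->
    exists l : seq word, forall eta, Delta t eta -> agree_on l xi eta -> g eta = g xi.

(* An element f of  (+)_{x in G} C(Delta_x ; Z): a family of continuous
   functions f x on Delta_x (values off Delta_x are irrelevant), with finite
   support contained in the list s. *)
Definition in_dsum (s : seq G) (f : G -> (word -> Prop) -> int) : Prop :=
  (forall x, continuous_on_Delta (gen x) (f x)) /\
  (forall x, x \notin s -> forall xi, Delta (gen x) xi -> f x xi = 0).

(* L_alpha f = sum_x ( f_x - alpha_x^{-1}(f_x) ), f_x extended by 0 *)
Definition Lalpha (s : seq G) (f : G -> (word -> Prop) -> int) (xi : (word -> Prop)) : int :=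
  \sum_(x <- undup s)
     ((if `[< Delta (gen x) xi >] then f x xi else 0)
      - (if `[< Delta (geninv x) xi >] then f x (translate x xi) else 0)).

(* psi( tilde frak R_A ): image under the unital ring homomorphism psi of the
   ring generated by 1, delta_i, rho_i; i.e. the subring of Z-valued functions
   on tilde Omega_A generated by 1, psi(delta_i) = 1_{Delta_i} and
   psi(rho_i) = 1_{Delta_{i^-1}}. *)
Inductive psiR : ((word -> Prop) -> int) -> Prop :=
  | psiR_one : psiR (fun _ => 1)
  | psiR_delta i : psiR (fun xi => if `[< Delta (gen i) xi >] then 1 else 0)
  | psiR_rho i : psiR (fun xi => if `[< Delta (geninv i) xi >] then 1 else 0)
  | psiR_add g h : psiR g -> psiR h -> psiR (fun xi => g xi + h xi)
  | psiR_opp g : psiR g -> psiR (fun xi => - g xi)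
  | psiR_mul g h : psiR g -> psiR h -> psiR (fun xi => g xi * h xi).

End Omega.

(* Main.v *)
Require Import Defs.
From mathcomp Require Import all_boot all_order all_algebra.
From mathcomp Require Import boolp.
From mathcomp Require Import zify.
From mathcomp Require Import classical_sets filter topology.
Require Import Defs.
Set Implicit Arguments. Unset Strict Implicit. Unset Printing Implicit Defensive.
Import GRing.Theory.
Local Open Scope ring_scope.

Section Words.
Variable G : eqType.
Implicit Types (w v z : word G) (a b : letter G).

Lemma linvK a : linv (linv a) = a.
Proof. by case: a => x []. Qed.

Lemma push_reduced a w : reduced w -> reduced (push a w).
Proof.
case: w => [|b w] //=.
case: ifP => [_|/negbT H] /=; last by move=> ->; rewrite H.
by case: w => [|c w] //= /andP[].
Qed.

Lemma fmul_reduced w v : reduced v -> reduced (fmul w v).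
Proof. by elim: w => [|a w IH] //= Hv; apply: push_reduced; apply: IH. Qed.

Lemma push_pushV a z : reduced z -> push a (push (linv a) z) = z.
Proof.
case: z => [|c z] /=; first by rewrite eqxx.
rewrite linvK; case: eqP => [->|_] /=.
  by case: z => [|d z] //= /andP[/negbTE -> _].
by rewrite eqxx.
Qed.

Lemma push_fmul a w v : reduced v -> push a (fmul w v) = fmul (push a w) v.
Proof.
move=> Hv; case: w => [|b w] //=.
case: eqP => [->|_] //=.
by rewrite push_pushV // fmul_reduced.
Qed.

Lemma fmulA (p q r : word G) : reduced r -> fmul (fmul p q) r = fmul p (fmul q r).
Proof.
move=> Hc; elim: p => [|x p IH] //=.
by rewrite -IH (push_fmul x (fmul p q) Hc).
Qed.

Lemma fmul_cat w v : reduced (w ++ v) -> fmul w v = w ++ v.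
Proof.
elim: w => [|a w IH] //= H.
have Hr : reduced (w ++ v) by move: H; case: (w ++ v) => [|b r] //= /andP[].
rewrite IH //; move: H; case: (w ++ v) => [|b r] //= /andP[/negbTE -> _].
by [].
Qed.

Lemma fmul0 w : reduced w -> fmul w [::] = w.
Proof. by move=> H; rewrite fmul_cat cats0. Qed.

Lemma finv_cons a w : finv (a :: w) = rcons (finv w) (linv a).
Proof. by rewrite /finv /= rev_cons. Qed.

Lemma fmul_rcons u b v : fmul (rcons u b) v = fmul u (push b v).
Proof. by rewrite /fmul foldr_rcons. Qed.

Lemma fmulVw w : fmul (finv w) w = [::].
Proof.
elim: w => [|a w IH] //.
by rewrite finv_cons fmul_rcons /= linvK eqxx.
Qed.

Lemma fmulwV w z : reduced z -> fmul w (fmul (finv w) z) = z.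
Proof.
elim: w z => [|a w IH] z Hz //.
rewrite finv_cons fmul_rcons /= IH ?push_reduced //.
exact: push_pushV.
Qed.

Lemma fmulVK w z : reduced z -> fmul (finv w) (fmul w z) = z.
Proof. by move=> Hz; rewrite -fmulA // fmulVw. Qed.

Lemma take_reduced k w : reduced w -> reduced (take k w).
Proof.
elim: w k => [|a w IH] [|k] //= H.
have Hw : reduced w by move: H; case: w {IH} => [|b w] //= /andP[].
have := IH k Hw.
move: H; case: w {IH Hw} => [|b w] //=; case: k => [|k] //=.
by move=> /andP[-> _] ->.
Qed.

Lemma reduced_rcons u a : reduced (rcons u a) -> reduced u.
Proof.
elim: u => [|b u IH] //=.
case: u IH => [|c u] //= IH /andP[-> H].
by rewrite IH.
Qed.

End Words.

Section Om.
Variable G : eqType.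
Variable A : G -> G -> bool.
Local Notation Om := (OmegaTau A).
Implicit Types (xi eta : word G -> Prop) (w v u s t : word G) (x y i : G).

Lemma genK x v : reduced v -> fmul (gen x) (fmul (geninv x) v) = v.
Proof. move=> H; exact: (fmulwV (gen x) H). Qed.
Lemma genVK x v : reduced v -> fmul (geninv x) (fmul (gen x) v) = v.
Proof. move=> H; exact: (fmulVK (gen x) H). Qed.
Lemma genVg x : fmul (geninv x) (gen x) = [::].
Proof. exact: (fmulVw (gen x)). Qed.

Lemma om_red xi w : Om xi -> xi w -> reduced w.
Proof. by case=> H *; apply: H. Qed.

Lemma om_nil xi : Om xi -> xi [::].
Proof. by case. Qed.

Lemma om_prefix xi t k : Om xi -> xi t -> xi (take k t).
Proof. by case=> _ H0 Hc _ _ Ht; have := Hc [::] t k H0 Ht. Qed.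

Lemma transE x xi v : Om xi ->
  (translate x xi v <-> reduced v /\ xi (fmul (geninv x) v)).
Proof.
move=> HO; split.
  case=> w [Hw ->]; have Hr := om_red HO Hw.
  by split; [exact: fmul_reduced | rewrite genVK].
case=> Hv Hw; exists (fmul (geninv x) v); split => //.
by rewrite genK.
Qed.

Lemma key_shift x (s0 : word G) t : reduced t ->
  fmul (finv (fmul (gen x) s0)) t = fmul (finv s0) (fmul (geninv x) t).
Proof.
move=> Ht.
have Hz : reduced (fmul (finv s0) (fmul (geninv x) t)) by do 2 apply: fmul_reduced.
have E : fmul (fmul (gen x) s0) (fmul (finv s0) (fmul (geninv x) t)) = t.
  rewrite fmulA // fmulwV ?genK //; exact: fmul_reduced.
by rewrite -{1}E fmulVK.
Qed.

Lemma Om_translate x xi : Om xi -> xi (geninv x) -> Om (translate x xi).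
Proof.
move=> HO Hx; have [Hr H0 Hc H4 H5] := HO.
split.
- by move=> w /(transE _ _ HO) [].
- by apply/(transE _ _ HO).
- move=> s t k /(transE _ _ HO) [Hs Hs0] /(transE _ _ HO) [Ht Ht0].
  have Hm : reduced (take k (fmul (finv s) t)) by apply: take_reduced; exact: fmul_reduced.
  apply/(transE _ _ HO); split; first exact: fmul_reduced.
  have Es : s = fmul (gen x) (fmul (geninv x) s) by rewrite genK.
  have Hm2 : fmul (finv s) t = fmul (finv (fmul (geninv x) s)) (fmul (geninv x) t).
    by rewrite {1}Es key_shift.
  rewrite -fmulA // Hm2; exact: Hc.
- move=> w y y' /(transE _ _ HO) [Hw Hw0] /(transE _ _ HO) [_ H1]
    /(transE _ _ HO) [_ H2].
  by apply: (H4 (fmul (geninv x) w)); rewrite // fmulA.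
- move=> w y x' /(transE _ _ HO) [Hw Hw0] /(transE _ _ HO) [_ H1].
  have H1' : xi (fmul (fmul (geninv x) w) (gen y)) by rewrite fmulA.
  have := H5 _ y x' Hw0 H1'; rewrite fmulA // => E.
  split.
    by move=> /(transE _ _ HO) [_ H]; apply/E.
  by move=> HA; apply/(transE _ _ HO); split; [exact: fmul_reduced | apply/E].
Qed.

Lemma unbounded_translate x xi : Om xi -> unbounded xi -> unbounded (translate x xi).
Proof.
move=> HO Hu [t [Ht Hb]]; apply: Hu.
exists (fmul (geninv x) t); split; first exact: fmul_reduced.
move=> s0 Hs0.
have Hs : translate x xi (fmul (gen x) s0) by exists s0.
have := Hb _ Hs; rewrite /fle key_shift //.
Qed.

Lemma OmegaTilde_translate x xi : OmegaTilde A xi -> xi (geninv x) ->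
  OmegaTilde A (translate x xi).
Proof.
move=> [HO Hcl] Hx; split; first exact: Om_translate.
move=> l; have [eta [HOe Hue Hag]] := Hcl (geninv x :: map (fmul (geninv x)) l).
have Hex : eta (geninv x) by apply/Hag => //; rewrite inE eqxx.
exists (translate x eta); split.
- exact: Om_translate.
- exact: unbounded_translate.
- move=> w Hw; rewrite (transE _ _ HO) (transE _ _ HOe).
  have Hw' : fmul (geninv x) w \in geninv x :: map (fmul (geninv x)) l.
    by rewrite inE map_f ?orbT.
  by split=> -[Hr H]; split=> //; apply/(Hag _ Hw').
Qed.

Lemma succ_unique xi y i : Om xi -> xi (gen y) -> xi (gen i) -> i = y.
Proof. by case=> _ H0 _ H4 _ Hy Hi; apply: (H4 [::] i y H0). Qed.

Lemma back0 xi y x : Om xi -> xi (gen y) -> (xi (geninv x) <-> A x y).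
Proof. by case=> _ H0 _ _ H5 Hy; apply: (H5 [::] y x H0). Qed.

Definition negw (u : word G) := all (fun a : letter G => ~~ a.2) u.
Definition succ y (u : word G) := if u is [::] then y else (last (y, false) u).1.

Lemma reduced_rcons_neg u (a : letter G) : reduced u -> negw u -> ~~ a.2 ->
  reduced (rcons u a).
Proof.
elim: u => [|b u IH] //= Hr /andP[Hb Hu] Ha.
have Hr' : reduced u by move: Hr; case: u {IH Hu} => [|c u] //= /andP[].
have := IH Hr' Hu Ha; case: u {IH Hr' Hu} Hr => [|c u] /= Hr Hrc.
  rewrite andbT; apply/eqP => E; move: Ha; rewrite E /=.
  by case: b Hb {E} => ? [].
by move: Hr => /andP[-> _].
Qed.

Lemma rcons_cat1 u (a : letter G) : rcons u a = u ++ [:: a].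
Proof. by rewrite cats1. Qed.

Lemma prefix_rcons xi u a : Om xi -> xi (rcons u a) -> xi u.
Proof.
move=> HO H; have := om_prefix (size u) HO H.
by rewrite rcons_cat1 take_size_cat.
Qed.

Lemma succ_in xi y u : Om xi -> xi (gen y) -> negw u -> xi u ->
  xi (fmul u (gen (succ y u))).
Proof.
move=> HO Hy; case/lastP: u => [|v a] //= Hn Hu.
rewrite /succ; case: v Hn Hu => [|b v] Hn Hu.
  move: Hn => /=; case: a Hu => x [] //= Hu _.
  by rewrite eqxx; apply: om_nil HO.
have -> : last (y, false) (rcons (b :: v) a) = a by rewrite last_rcons.
move: Hn; rewrite /negw all_rcons => /andP[Ha _].
case: a Ha Hu => x [] //= _ Hu.
rewrite -rcons_cons in Hu.
rewrite fmul_rcons (_ : push (x, false) _ = [::]); last by rewrite /= eqxx.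
have := prefix_rcons HO Hu; rewrite -{1}(fmul0 (reduced_rcons (om_red HO Hu))); exact.
Qed.

Lemma rcons_neg_iff xi y v x : Om xi -> xi (gen y) -> negw v ->
  (xi (rcons v (x, false)) <-> xi v /\ A x (succ y v)).
Proof.
move=> HO Hy Hn; have [_ _ _ _ H5] := HO; split.
  move=> H; have Hv := prefix_rcons HO H; split=> //.
  apply/(H5 v (succ y v) x Hv (succ_in HO Hy Hn Hv)).
  by rewrite /geninv fmul_cat -?rcons_cat1 // (om_red HO H).
move=> [Hv HA]; have := (H5 v (succ y v) x Hv (succ_in HO Hy Hn Hv)).2 HA.
rewrite /geninv fmul_cat -?rcons_cat1 //.
exact: reduced_rcons_neg (om_red HO Hv) Hn _.
Qed.

Lemma neg_agree xi xi' y u : Om xi -> Om xi' -> xi (gen y) -> xi' (gen y) ->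
  negw u -> (xi u <-> xi' u).
Proof.
move=> HO HO' Hy Hy'; elim/last_ind: u => [|v a IH].
  by move=> _; split=> _; [exact: om_nil HO' | exact: om_nil HO].
rewrite /negw all_rcons => /andP[Ha Hn]; case: a Ha => x [] //= _.
rewrite (rcons_neg_iff _ HO Hy Hn) (rcons_neg_iff _ HO' Hy' Hn) IH //.
Qed.

Lemma reduced_cons a u : reduced (a :: u) -> reduced u.
Proof. by case: u => [|b u] //= /andP[]. Qed.

Lemma not_reduced_back u (b : letter G) : ~~ reduced (rcons (rcons u b) (linv b)).
Proof.
elim: u => [|c u IH] /=; first by rewrite eqxx.
by apply/negP => /reduced_cons; apply/negP.
Qed.

Definition headneg (u : word G) := if u is a :: _ then ~~ a.2 else true.

Lemma succ_rcons y u c : succ y (rcons u c) = c.1.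
Proof. by case: u => [|d u] //=; rewrite last_rcons. Qed.

Lemma neg_closed xi y u : Om xi -> xi (gen y) -> xi u -> headneg u -> negw u.
Proof.
move=> HO Hy; elim/last_ind: u => [|v a IH] // Hu Hh.
have Hv := prefix_rcons HO Hu.
have Hhv : headneg v by case: v {IH Hv Hu} Hh.
have Hn := IH Hv Hhv.
rewrite /negw all_rcons; move: (Hn); rewrite /negw => ->; rewrite andbT.
case: a Hu Hh => z [] //= Hu Hh.
have [_ _ _ H4 _] := HO.
case/lastP: v Hv Hhv Hn Hu Hh {IH} => [|v' c] Hv Hhv Hn Hu Hh //.
have Hn' := Hn; move: Hn'; rewrite /negw all_rcons => /andP[Hc _].
have Hs := succ_in HO Hy Hn Hv; rewrite succ_rcons in Hs.
have Hr := om_red HO Hu.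
have Hz : xi (fmul (rcons v' c) (gen z)) by rewrite /gen fmul_cat -?rcons_cat1.
have E := H4 _ _ _ Hv Hs Hz.
case: c Hc E Hr {Hs Hz Hv Hhv Hn Hu Hh} => b [] //= _ ->.
by move/negP: (not_reduced_back v' (z, false)).
Qed.

Lemma neg_head_agree xi xi' y x u : Om xi -> Om xi' -> xi (gen y) -> xi' (gen y) ->
  (xi ((x, false) :: u) <-> xi' ((x, false) :: u)).
Proof.
move=> HO HO' Hy Hy'; split=> H.
  exact: (neg_agree HO HO' Hy Hy' (neg_closed HO Hy H isT)).1 H.
exact: (neg_agree HO HO' Hy Hy' (neg_closed HO' Hy' H isT)).2 H.
Qed.

Lemma AgT xi xi' y x k : Om xi -> Om xi' -> xi (gen y) -> xi' (gen y) ->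
  (forall w, (size w <= k)%N -> (xi w <-> xi' w)) ->
  forall w, (size w <= k.+1)%N -> (translate x xi w <-> translate x xi' w).
Proof.
move=> HO HO' Hy Hy' Hk w Hw.
rewrite (transE _ _ HO) (transE _ _ HO').
suff E : xi (fmul (geninv x) w) <-> xi' (fmul (geninv x) w).
  by split=> -[Hr H]; split=> //; apply/E.
rewrite /geninv /=.
case: w Hw => [|b w] Hw /=; first exact: (neg_head_agree x [::] HO HO' Hy Hy').
case: ifP => _; last exact: (neg_head_agree x _ HO HO' Hy Hy').
by apply: Hk.
Qed.

End Om.

Section Top.
Local Close Scope ring_scope.
Local Open Scope classical_set_scope.
Variable G : eqType.
Variable A : G -> G -> bool.
Local Notation Om := (OmegaTau A).
Implicit Types (xi eta : word G -> Prop) (w v u s t : word G) (x y i : G).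

Lemma agree_mem (l : seq (word G)) xi eta w : agree_on l xi eta -> w \in l -> (xi w <-> eta w).
Proof. by move=> H /H. Qed.

Lemma Delta_closed t xi : (forall l, exists eta, Delta A t eta /\ agree_on l xi eta) ->
  Delta A t xi.
Proof.
move=> H.
have T3 : forall a b c : word G, a \in [:: a; b; c] /\ b \in [:: a; b; c] /\ c \in [:: a; b; c].
  by move=> a b c; rewrite !inE !eqxx !orbT.
split; last first.
  have [eta [[_ He] Hag]] := H [:: t].
  by apply/(Hag t); rewrite ?inE ?eqxx.
split.
  split.
  - move=> w Hw; have [eta [[[HO _] _] Hag]] := H [:: w].
    by apply: (om_red HO); apply/(Hag w); rewrite ?inE ?eqxx.
  - have [eta [[[HO _] _] Hag]] := H [:: [::]].
    by apply/(Hag [::]); rewrite ?inE ?eqxx //; exact: om_nil HO.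
  - move=> s t' k Hs Ht.
    have [eta [[[HO _] _] Hag]] := H [:: s; t'; fmul s (take k (fmul (finv s) t'))].
    have [m1 [m2 m3]] := T3 s t' (fmul s (take k (fmul (finv s) t'))).
    have [_ _ Hc _ _] := HO.
    apply/(Hag _ m3); apply: Hc; [exact/(Hag _ m1) | exact/(Hag _ m2)].
  - move=> w y y' H1 H2 H3.
    have [eta [[[HO _] _] Hag]] := H [:: w; fmul w (gen y); fmul w (gen y')].
    have [m1 [m2 m3]] := T3 w (fmul w (gen y)) (fmul w (gen y')).
    have [_ _ _ H4 _] := HO.
    by apply: (H4 w); [exact/(Hag _ m1) | exact/(Hag _ m2) | exact/(Hag _ m3)].
  - move=> w y x H1 H2.
    have [eta [[[HO _] _] Hag]] := H [:: w; fmul w (gen y); fmul w (geninv x)].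
    have [m1 [m2 m3]] := T3 w (fmul w (gen y)) (fmul w (geninv x)).
    have [_ _ _ _ H5] := HO.
    rewrite (Hag _ m3); apply: H5; [exact/(Hag _ m1) | exact/(Hag _ m2)].
move=> l; have [eta [[[HO Hcl] _] Hag]] := H l.
have [eta' [HO' Hu' Hag']] := Hcl l.
exists eta'; split=> // w Hw.
by rewrite (Hag _ Hw) (Hag' _ Hw).
Qed.

Import ArrowAsProduct.

Local Notation TT := (word G -> bool).

Lemma nbhs_agree (p : TT) (l : seq (word G)) :
  nbhs p [set b : TT | forall w, w \in l -> b w = p w].
Proof.
elim: l => [|w l IH].
  apply: (filterS _ (@filterT _ (nbhs p) _)) => b _ w; by rewrite in_nil.
have Hw : nbhs p [set b : TT | b w = p w].
  have H0 := (@proj_continuous _ (fun _ : word G => bool) w p).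
  apply: (H0 [set p w]). by apply/principal_filterP.
apply: (filterS _ (filterI Hw IH)) => b [H1 H2] w'; rewrite inE => /orP[/eqP -> //|].
exact: H2.
Qed.

Lemma TT_compact : compact [set: TT].
Proof.
have := @tychonoff _ (fun _ : word G => bool) _ (fun=> bool_compact).
by congr (compact _); apply/seteqP; split.
Qed.

Definition PB (b : TT) : word G -> Prop := fun w => b w.

Lemma PB_asb xi : PB (fun w => `[< xi w >]) = xi.
Proof. by apply: funext => w; rewrite /PB asboolE. Qed.

Lemma K_closed t : closed [set b : TT | Delta A t (PB b)].
Proof.
move=> p Hp; apply: Delta_closed => l.
have [b [Kb Nb]] := Hp _ (nbhs_agree p l).
by exists (PB b); split => // w Hw; rewrite /PB (Nb w Hw).
Qed.

Lemma UC t (h : (word G -> Prop) -> int) : continuous_on_Delta A t h ->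
  exists L : seq (word G), forall xi xi', Delta A t xi -> Delta A t xi' ->
    agree_on L xi xi' -> h xi = h xi'.
Proof.
move=> hc.
set K := [set b : TT | Delta A t (PB b)].
have cK : compact K by apply: (subclosed_compact (@K_closed t) TT_compact).
apply: contrapT => Hno.
pose Bad := fun L : seq (word G) => [set b : TT | K b /\ exists b', K b' /\ (forall w, w \in L -> b w = b' w) /\ h (PB b) <> h (PB b')].
have BadN : forall L, Bad L !=set0.
  move=> L; apply: contrapT => HN; apply: Hno; exists L => xi xi' Hx Hx' Hag.
  case: (eqVneq (h xi) (h xi')) => // Hne; exfalso; apply: HN.
  exists (fun w => `[< xi w >]); split; first by rewrite /K /= PB_asb.
  exists (fun w => `[< xi' w >]); split; first by rewrite /K /= PB_asb.
  split; last by rewrite !PB_asb; apply/eqP.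
  by move=> w Hw; apply: asbool_equiv_eq; exact: Hag.
pose F := filter_from (@classical_sets.setT (seq (word G))) Bad.
have FF : Filter F.
  apply: filter_from_filter; first by exists [::].
  move=> i j _ _; exists (i ++ j) => // b [Kb [b' [Kb' [Hag Hne]]]]; split.
    split=> //; exists b'; split=> //; split=> // w Hw; apply: Hag.
    by rewrite mem_cat Hw.
  split=> //; exists b'; split=> //; split=> // w Hw; apply: Hag.
  by rewrite mem_cat Hw orbT.
have PF : ProperFilter F by apply: filter_from_proper => // L _; exact: BadN.
have FK : F K by exists [::] => // b [].
have [p [Kp Cp]] := cK F PF FK.
have [l Hl] := hc (PB p) Kp.
have FB : F (Bad l) by exists l.
have [b [[Kb [b' [Kb' [Hag Hne]]]] Nb]] := Cp _ _ FB (nbhs_agree p l).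
apply: Hne.
have E1 : h (PB b) = h (PB p) by apply: Hl => // w Hw; rewrite /PB (Nb w Hw).
have E2 : h (PB b') = h (PB p).
  by apply: Hl => // w Hw; rewrite /PB -(Hag w Hw) (Nb w Hw).
by rewrite E1 E2.
Qed.

End Top.

Section Main.
Variable G : eqType.
Variable A : G -> G -> bool.
Implicit Types (xi eta : word G -> Prop) (w v u s t : word G) (x y i : G).

Lemma Delta_gen_iff xi y i : Delta A (gen y) xi -> (Delta A (gen i) xi <-> i = y).
Proof.
move=> [[HO Hcl] Hy]; split; first by move=> [_ Hi]; exact: succ_unique HO Hy Hi.
by move=> ->.
Qed.

Lemma Delta_geninv_iff xi y i : Delta A (gen y) xi -> (Delta A (geninv i) xi <-> A i y).
Proof.
move=> [[HO Hcl] Hy]; split; first by move=> [_ Hi]; apply/(back0 _ HO Hy).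
by move=> HA; split; [split|apply/(back0 _ HO Hy)].
Qed.

Lemma psiR_dep g xi xi' : psiR A g ->
  (forall i, Delta A (gen i) xi <-> Delta A (gen i) xi') ->
  (forall i, Delta A (geninv i) xi <-> Delta A (geninv i) xi') -> g xi = g xi'.
Proof.
move=> Hg H1 H2; elim: Hg => //=.
- by move=> i; rewrite (asbool_equiv_eq (H1 i)).
- by move=> i; rewrite (asbool_equiv_eq (H2 i)).
- by move=> g1 g2 _ -> _ ->.
- by move=> g1 _ ->.
- by move=> g1 g2 _ -> _ ->.
Qed.

Lemma sum_if1 (r : seq G) y (d : int) : uniq r ->
  \sum_(x <- r) (if x == y then d else 0) = if y \in r then d else 0.
Proof.
elim: r => [|a r IH] /=; first by rewrite big_nil.
move=> /andP[Ha Hu]; rewrite big_cons IH // inE.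
case: (eqVneq a y) => [<-|Hne]; first by rewrite ?eqxx (negbTE Ha) addr0.
by rewrite add0r.
Qed.

Definition Dk (f : G -> (word G -> Prop) -> int) k := forall y xi xi',
  Delta A (gen y) xi -> Delta A (gen y) xi' ->
  (forall w, (size w <= k)%N -> (xi w <-> xi' w)) -> f y xi = f y xi'.

Lemma step (s : seq G) f g k : in_dsum A s f -> psiR A g ->
  (forall xi, OmegaTilde A xi -> Lalpha A s f xi = g xi) -> Dk f k.+1 -> Dk f k.
Proof.
move=> [_ Hz] Hg HL IH y xi xi' Hx Hx' Hag.
have [[HO _] Hy] := Hx; have [[HO' _] Hy'] := Hx'.
have T2 : forall x,
  (if `[< Delta A (geninv x) xi >] then f x (translate x xi) else 0) =
  (if `[< Delta A (geninv x) xi' >] then f x (translate x xi') else 0).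
  move=> x.
  have E := iff_trans (Delta_geninv_iff x Hx) (iff_sym (Delta_geninv_iff x Hx')).
  rewrite (asbool_equiv_eq E); case: asboolP => // Hd.
  have Hd' := E.2 Hd.
  apply: IH.
  - split; first exact: OmegaTilde_translate Hx.1 Hd'.2.
    by apply/(transE _ _ HO); split=> //; rewrite genVg; exact: om_nil HO.
  - split; first exact: OmegaTilde_translate Hx'.1 Hd.2.
    by apply/(transE _ _ HO'); split=> //; rewrite genVg; exact: om_nil HO'.
  - exact: AgT HO HO' Hy Hy' Hag.
have EL : Lalpha A s f xi = Lalpha A s f xi'.
  rewrite (HL xi Hx.1) (HL xi' Hx'.1); apply: (psiR_dep Hg) => i.
    exact: iff_trans (Delta_gen_iff i Hx) (iff_sym (Delta_gen_iff i Hx')).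
  exact: iff_trans (Delta_geninv_iff i Hx) (iff_sym (Delta_geninv_iff i Hx')).
have T1 : forall xi0, Delta A (gen y) xi0 ->
  \sum_(x <- undup s) (if `[< Delta A (gen x) xi0 >] then f x xi0 else 0)
  = if y \in undup s then f y xi0 else 0.
  move=> xi0 Hx0; rewrite -sum_if1 ?undup_uniq //; apply: eq_bigr => x _.
  case: (eqVneq x y) => [->|Hne]; first by rewrite asboolT.
  by rewrite asboolF // => /(Delta_gen_iff x Hx0) /eqP; rewrite (negbTE Hne).
move: EL; rewrite /Lalpha !sumrB.
rewrite (eq_bigr _ (fun x _ => T2 x)) => /addIr.
rewrite !T1 // mem_undup; case: ifP => [_ -> //|/negbT Hys _].
by rewrite (Hz y Hys xi Hx) (Hz y Hys xi' Hx').
Qed.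

Lemma base (s : seq G) f : in_dsum A s f -> exists M, Dk f M.
Proof.
move=> [Hc Hz].
have [L HL] : exists L : seq (word G), forall x, x \in s -> forall xi xi',
    Delta A (gen x) xi -> Delta A (gen x) xi' -> agree_on L xi xi' -> f x xi = f x xi'.
  elim: s {Hz} => [|a r [Lr Hr]]; first by exists [::].
  have [La Ha] := UC (Hc a).
  exists (La ++ Lr) => x; rewrite inE => /orP[/eqP -> | Hx] xi xi' H1 H2 Hag.
    by apply: Ha => // w Hw; apply: Hag; rewrite mem_cat Hw.
  by apply: Hr => // w Hw; apply: Hag; rewrite mem_cat Hw orbT.
pose M := foldr maxn 0%N (map size L).
have HM : forall w, w \in L -> (size w <= M)%N.
  rewrite /M; elim: (L) => [|a r IH] w //=; rewrite inE => /orP[/eqP ->|Hw].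
    exact: leq_maxl.
  exact: leq_trans (IH w Hw) (leq_maxr _ _).
exists M => y xi xi' Hx Hx' Hag.
case: (boolP (y \in s)) => Hy; last by rewrite (Hz y Hy xi Hx) (Hz y Hy xi' Hx').
by apply: HL => // w Hw; apply: Hag; exact: HM.
Qed.

End Main.

Theorem lemma4p11 (G : eqType) (A : G -> G -> bool)
  (no_zero_row : forall i : G, exists j : G, A i j)
  (s : seq G) (f : G -> (word G -> Prop) -> int) :
  in_dsum A s f ->
  (exists g, psiR A g /\ forall xi, OmegaTilde A xi -> Lalpha A s f xi = g xi) ->
  exists n : G -> int,
    (exists s' : seq G, forall x, x \notin s' -> n x = 0) /\
    (forall x xi, Delta A (gen x) xi -> f x xi = n x).
Proof.
move=> Hd [g [Hg HL]].
have [M HM] := base Hd.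
have Dj : forall j, Dk A f (M - j)%N.
  elim=> [|j IHj]; first by rewrite subn0.
  case: (ltnP j M) => Hj.
    apply: (step Hd Hg HL); rewrite (_ : ((M - j.+1).+1 = M - j)%N) //; lia.
  by rewrite (_ : M - j.+1 = M - j)%N //; lia.
have D0 : Dk A f 0 by move: (Dj M); rewrite subnn.
pose n x := match pselect (exists xi, Delta A (gen x) xi) with
  | left H => f x (projT1 (cid H)) | right _ => 0 end.
exists n; split.
  exists s => x Hx; rewrite /n; case: pselect => // H.
  case: cid => xi Hxi /=; exact: Hd.2 x Hx xi Hxi.
move=> x xi Hxi; rewrite /n; case: pselect => [H|H]; last by exfalso; apply: H; exists xi.
case: cid => xi0 Hxi0 /=; apply: D0 => // -[|a w] // _.
by split=> _; [exact: om_nil Hxi0.1.1 | exact: om_nil Hxi.1.1].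
Qed.
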